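(* Let $T$ be a finite rooted tree with root $v_0$ and leaves identified with classes $1,\dots,K$; identify each non-root node $v_j$ with the set of classes in its subtree, and let $a(y)$ be the set of non-root nodes on the path from leaf $y$ to the root (including the leaf). For a probability vector $f=(f_1,\dots,f_K)$ and label $y$, define the unweighted loss $$\mathcal L(f,y)=-\sum_{v_j\in a(y)}\log\Big(\sum_{k\in v_j} f_k\Big).$$ Then $\mathcal L$ is not, in general, a proper scoring rule: there exist trees $T$ and probability vectors $\pi$ such that $f=\pi$ does not minimize $\sum_{k=1}^K\pi_k\,\mathcal L(f,k)$ over the probability simplex.
   Context: Proper scoring rule: a loss $\mathcal L(f,y)$ on probability vectors over $K$ classes is proper if, for every distribution $\pi$ of the label, the expected loss $\sum_k \pi_k\mathcal L(f,k)$ is minimized over the simplex at $f=\pi$. *)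

(* Defs.v *)
From HB Require Import structures.
From mathcomp Require Import all_boot all_order all_algebra.
From mathcomp Require Import all_classical all_reals all_analysis.
Set Implicit Arguments. Unset Strict Implicit. Unset Printing Implicit Defensive.
Import Order.TTheory GRing.Theory Num.Theory.
Local Open Scope ring_scope.

(* Nodes form a finite type; every node has a parent (root is its own parent),
   every node reaches the root by iterating parent (so the structure is a tree),
   and the leaves (nodes without children) are exactly the images of the
   injective labelling [leaf]. *)
Record hier_tree (K : nat) := HierTree {
  node : finType;
  root : node;
  parent : node -> node;
  parent_root : parent root = root;
  reach_root : forall v, exists n, iter n parent v = root;
  leaf : 'I_K -> node;
  leaf_inj : injective leaf;
  leaf_not_root : forall y, leaf y != root;
  leaf_spec : forall v, v != root ->
     ((forall w, w != root -> parent w != v) <-> exists y, leaf y = v)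
}.

Section Loss.
Variables (R : realType) (K : nat) (T : hier_tree K).

Definition anc (v w : node T) : bool :=
  [exists n : 'I_(#|node T|).+1, iter n (@parent _ T) w == v].

Definition cls (v : node T) : {set 'I_K} := [set y | anc v (leaf T y)].

Definition apath (y : 'I_K) : {set node T} :=
  [set v | anc v (leaf T y) && (v != root T)].

Definition mass (f : 'I_K -> R) (v : node T) : R := \sum_(k in cls v) f k.

(* -log of the mass, +oo when the mass is 0 (log 0 = -oo). *)
Definition nlog (x : R) : \bar R := if 0 < x then (- ln x)%:E else +oo%E.

Definition hloss (f : 'I_K -> R) (y : 'I_K) : \bar R :=
  (\sum_(v in apath y) nlog (mass f v))%E.

End Loss.

Definition simplex (R : realType) (K : nat) (f : 'I_K -> R) : Prop :=
  (forall k, 0 <= f k) /\ \sum_(k < K) f k = 1.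

Definition expected_loss (R : realType) (K : nat)
  (L : ('I_K -> R) -> 'I_K -> \bar R) (pi f : 'I_K -> R) : \bar R :=
  (\sum_(k < K) (pi k)%:E * L f k)%E.

Definition proper_scoring (R : realType) (K : nat)
  (L : ('I_K -> R) -> 'I_K -> \bar R) : Prop :=
  forall pi, simplex pi -> forall f, simplex f ->
    (expected_loss L pi pi <= expected_loss L pi f)%E.

(* Main.v *)
Require Import Defs.
From HB Require Import structures.
From mathcomp Require Import all_boot all_order all_algebra.
From mathcomp Require Import all_classical all_reals all_analysis.
From mathcomp Require Import lra.
Set Implicit Arguments. Unset Strict Implicit. Unset Printing Implicit Defensive.
Import Order.TTheory GRing.Theory Num.Theory.
Local Open Scope ring_scope.

Notation N := 'I_4.
Definition rt : N := ord0.
Definition a1 : N := @Ordinal 4 1 isT.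
Definition a2 : N := @Ordinal 4 2 isT.
Definition a3 : N := @Ordinal 4 3 isT.
Definition par (v : N) : N := if val v == 3%N then a2 else rt.
Definition lf (k : 'I_2) : N := if val k == 0%N then a1 else a3.

Lemma par_rt : par rt = rt. Proof. by []. Qed.
Lemma par2 (v : N) : par (par v) = rt.
Proof. by rewrite /par; case: (val v == 3%N). Qed.
Lemma reach (v : N) : exists n, iter n par v = rt.
Proof. by exists 2%N; rewrite /= par2. Qed.
Lemma lf_inj : injective lf.
Proof. by move=> [[|[|?]] ?] [[|[|?]] ?] //= _; apply/val_inj. Qed.
Lemma lf_nr (y : 'I_2) : lf y != rt.
Proof. by case: y => [[|[|?]] ?]. Qed.
Lemma lf_spec (v : N) : v != rt ->
  ((forall w, w != rt -> par w != v) <-> exists y, lf y = v).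
Proof.
case: v => [[|[|[|[|n]]]] hv] //= _; split.
- by move=> _; exists ord0; apply/val_inj.
- by move=> _ w _; rewrite /par; case: (val w == 3%N).
- by move=> /(_ a3); rewrite /par /= => /(_ isT).
- by case=> [[[|[|?]] ?]] /(congr1 val).
- by move=> _; exists (@Ordinal 2 1 isT); apply/val_inj.
- move=> _ w _; rewrite /par; case: (val w == 3%N) => //.
Qed.

Definition T0 : hier_tree 2 := HierTree par_rt reach lf_inj lf_nr lf_spec.

Lemma cardN : #|node T0| = 4%N. Proof. exact: card_ord. Qed.

Lemma ancE (v w : node T0) : anc v w = [|| w == v, par w == v | par (par w) == v].
Proof.
apply/existsP/idP.
- case=> [[[|[|n]] /= _]] H; rewrite ?H ?orbT //.
  by rewrite par2; move: H; rewrite /= par2 => ->; rewrite !orbT.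
- case/or3P => H.
  + by exists (@Ordinal (#|node T0|.+1) 0 ltac:(by rewrite cardN)).
  + by exists (@Ordinal (#|node T0|.+1) 1 ltac:(by rewrite cardN)).
  + by exists (@Ordinal (#|node T0|.+1) 2 ltac:(by rewrite cardN)).
Qed.

Definition b0 : 'I_2 := ord0.
Definition b1 : 'I_2 := @Ordinal 2 1 isT.

Lemma ap0 : apath T0 b0 = [set a1].
Proof. by apply/setP => -[[|[|[|[|n]]]] ?]; rewrite !inE ancE. Qed.
Lemma ap1 : apath T0 b1 = [set a2; a3].
Proof. by apply/setP => -[[|[|[|[|n]]]] ?]; rewrite !inE ancE. Qed.
Lemma cl1 : cls (a1 : node T0) = [set b0] :> {set 'I_2}.
Proof. by apply/setP => -[[|[|n]] ?]; rewrite !inE ancE. Qed.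
Lemma cl2 : cls (a2 : node T0) = [set b1] :> {set 'I_2}.
Proof. by apply/setP => -[[|[|n]] ?]; rewrite !inE ancE. Qed.
Lemma cl3 : cls (a3 : node T0) = [set b1] :> {set 'I_2}.
Proof. by apply/setP => -[[|[|n]] ?]; rewrite !inE ancE. Qed.

Lemma hlossE (R : realType) (f : 'I_2 -> R) (k : 'I_2) :
  hloss T0 f k = if val k == 0%N then nlog (f b0) else (nlog (f b1) + nlog (f b1))%E.
Proof.
case: k => -[|[|n]] hk //=.
- rewrite (_ : Ordinal hk = b0); last exact/val_inj.
  by rewrite /hloss ap0 big_set1 /mass cl1 big_set1.
- rewrite (_ : Ordinal hk = b1); last exact/val_inj.
  rewrite /hloss ap1 big_setU1 ?inE // big_set1 /mass cl2 cl3 !big_set1.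
  by [].
Qed.

Theorem proposition2 (R : realType) :
  exists (K : nat) (T : hier_tree K), ~ proper_scoring (@hloss R K T).
Proof.
exists 2%N, T0 => H.
pose pi : 'I_2 -> R := fun _ => 1 / 2.
pose f : 'I_2 -> R := fun k => if val k == 0%N then 1 / 4 else 3 / 4.
have spi : simplex pi.
  by split=> [k|]; rewrite ?big_ord_recl ?big_ord0 /pi; lra.
have sf : simplex f.
  split=> [k|]; rewrite ?big_ord_recl ?big_ord0 /f /=; first by case: (val k == 0%N); lra.
  lra.
have := H pi spi f sf.
rewrite /expected_loss !big_ord_recl !big_ord0 !hlossE /= /pi /f /= /nlog.
have h2 : (0:R) < 1/2 by lra.
have h4 : (0:R) < 1/4 by lra.
have h34 : (0:R) < 3/4 by lra.
rewrite h2 h4 h34 !adde0 -!EFinD lee_fin.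
have l2 : ln (1/2 : R) = - ln 2.
  by rewrite mul1r lnV // posrE.
have l4 : ln (1/4 : R) = - (ln 2 *+ 2).
  by rewrite mul1r lnV ?posrE // -lnXn // -natrX.
have l34 : ln (3/4 : R) = ln 3 - ln 2 *+ 2.
  by rewrite ln_div ?posrE // -lnXn // -natrX.
have l89 : ln (2:R) *+ 3 < ln (3:R) *+ 2.
  by rewrite -!lnXn // ltr_ln ?posrE -?natrX ?ltr_nat ?exprn_gt0.
rewrite l2 l4 l34; move: l89; rewrite mulrSr !mulr2n.
move: (ln (2:R)) (ln (3:R)) => a b hab hle.
set h := (1 / (1 + 1) : R) in hle.
have eh : h = 1 / 2 by [].
rewrite eh in hle.
have h1 : b * 2 <= a * 3 by move: hle; lra.
have h3 : a * 3 < b * 2 by move: hab; lra.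
by move: (lt_le_trans h3 h1); rewrite ltxx.
Qed.
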